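(* Let $E$ be a finite-dimensional real vector space and $M\subseteq E$ a convex polytope with non-empty interior. If $r>0$ and $\gamma\colon[0,r[\,\to M$ is a $C^1$-map, then there exists $\varepsilon>0$ such that $\gamma(0)+t\gamma'(0)\in M$ for all $t\in[0,\varepsilon]$.
   Context: A convex polytope is the convex hull of a finite set. A map $\gamma\colon[0,r[\,\to E$ is $C^1$ if it is continuous, $C^1$ on $]0,r[$, and $\gamma'$ extends continuously to $[0,r[$ (so $\gamma'(0)$ is this extension's value, equivalently the one-sided derivative at $0$). *)

(* Defs.v *)
(* E = 'rV[R]_n with R : realType (a finite-dimensional real vector space). *)
From HB Require Import structures.
From mathcomp Require Import all_boot all_order all_algebra.
From mathcomp Require Import all_classical all_reals all_analysis.
Set Implicit Arguments. Unset Strict Implicit. Unset Printing Implicit Defensive.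
Import Order.TTheory GRing.Theory Num.Theory.
Import numFieldNormedType.Exports.
Local Open Scope classical_set_scope.
Local Open Scope ring_scope.

Definition conv_hull_fin (R : realType) (n k : nat) (v : 'I_k -> 'rV[R]_n)
  : set 'rV[R]_n :=
  [set x | exists l : 'I_k -> R,
     (forall i, 0 <= l i) /\ \sum_(i < k) l i = 1 /\ x = \sum_(i < k) l i *: v i].

Definition convex_polytope (R : realType) (n : nat) (M : set 'rV[R]_n) : Prop :=
  exists (k : nat) (v : 'I_k -> 'rV[R]_n), M = conv_hull_fin v.

(* gamma : [0,r[ -> E is C^1 (values outside [0,r[ are irrelevant), with
   derivative extension dg: gamma is continuous on [0,r[, differentiable on
   ]0,r[, and its derivative agrees on ]0,r[ with dg, continuous on [0,r[.
   Then gamma'(0) := dg 0. *)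
Definition C1_on_halfopen (R : realType) (n : nat) (r : R)
  (gamma dg : R -> 'rV[R]_n) : Prop :=
  {within `[0, r[, continuous gamma} /\
  (forall t, 0 < t < r -> derivable gamma t 1) /\
  (forall t, 0 < t < r -> derive1 gamma t = dg t) /\
  {within `[0, r[, continuous dg}.

(* Main.v *)
Require Import Defs.
From HB Require Import structures.
From mathcomp Require Import all_boot all_order all_algebra.
From mathcomp Require Import all_classical all_reals all_analysis.
From mathcomp Require Import lra ring.
Set Implicit Arguments. Unset Strict Implicit. Unset Printing Implicit Defensive.
Import Order.TTheory GRing.Theory Num.Theory.
Import numFieldNormedType.Exports.
Local Open Scope classical_set_scope.
Local Open Scope ring_scope.

Section Aux.
Variable R : realType.
Variable n : nat.

Lemma mxnorm_entry a b (M : 'M[R]_(a, b)) i j : `|M i j| <= `|M|.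
Proof.
rewrite [leRHS]/Num.Def.normr/= mx_normrE.
exact: (le_bigmax _ (fun ij : 'I_a * 'I_b => `|M ij.1 ij.2|) (i, j)).
Qed.

Lemma mxnorm_lt a b (M : 'M[R]_(a, b)) e : 0 < e ->
  (forall i j, `|M i j| < e) -> `|M| < e.
Proof.
move=> e0 H; rewrite /Num.Def.normr/= mx_normrE.
by apply: bigmax_lt => // -[i j] _; exact: H.
Qed.

Lemma lincoord_cont k (A : 'M[R]_(n, k)) i :
  continuous (fun x : 'rV[R]_n => (x *m A) 0 i).
Proof.
have -> : (fun x : 'rV[R]_n => (x *m A) 0 i) =
  (fun x => \sum_(j < n) (fun j (x : 'rV[R]_n) => x 0 j * A j i) j x).
  by apply: funext => x; rewrite mxE.
apply: continuous_big; first exact: add_continuous.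
move=> j _ x.
apply: (@continuous_comp _ _ _ (fun x : 'rV[R]_n => x 0 j) (fun y : R => y * A j i)).
  exact: coord_continuous.
exact: mulrr_continuous.
Qed.

Definition cone k (w : 'I_k -> 'rV[R]_n) : set 'rV[R]_n :=
  [set x | exists mu : 'I_k -> R, (forall i, 0 <= mu i) /\ x = \sum_i mu i *: w i].

Definition wmx k (w : 'I_k -> 'rV[R]_n) : 'M[R]_(k, n) := \matrix_(i, j) w i 0 j.

Lemma row_wmx k (w : 'I_k -> 'rV[R]_n) i : row i (wmx w) = w i.
Proof. by apply/rowP => j; rewrite !mxE. Qed.

Lemma sum_wmx k (w : 'I_k -> 'rV[R]_n) (mu : 'I_k -> R) :
  \sum_i mu i *: w i = (\row_i mu i) *m wmx w.
Proof.
rewrite mulmx_sum_row; apply: eq_bigr => i _; by rewrite row_wmx mxE.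
Qed.

Lemma cone_indep_closed k (w : 'I_k -> 'rV[R]_n) :
  row_free (wmx w) -> closed (cone w).
Proof.
move=> rf; set W := wmx w; set P := pinvmx W.
have -> : cone w = (\bigcap_(i in setT) [set x | 0 <= (x *m P) 0 i]) `&`
    (\bigcap_(i in setT) [set x | (x *m (P *m W - 1%:M)) 0 i = 0]).
  apply/seteqP; split => x.
    move=> [mu [mu0 ->]]; rewrite sum_wmx.
    have E : (\row_i mu i) *m W *m P = \row_i mu i.
      apply: (row_free_inj rf); rewrite mulmxKpV //; exact: submxMl.
    split => i _ /=; first by rewrite -/W E mxE.
    by rewrite -/W mulmxBr mulmx1 mulmxA E subrr mxE.
  move=> [H1 H2]; exists (fun i => (x *m P) 0 i); split.
    by move=> i; exact: H1.
  have -> : \sum_i (x *m P) 0 i *: w i = x *m P *m W.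
    by rewrite sum_wmx; congr (_ *m _); apply/rowP => i; rewrite !mxE.
  have : x *m (P *m W - 1%:M) = 0 by apply/rowP => i; rewrite (H2 i I) mxE.
  by rewrite mulmxBr mulmx1 mulmxA => /eqP; rewrite subr_eq0 => /eqP.
apply: closedI; apply: closed_bigI => i _.
  by have := (continuous_closedP _).1 (@lincoord_cont k P i) _ (@closed_ge R 0).
by have := (continuous_closedP _).1 (@lincoord_cont n (P *m W - 1%:M) i) _ (@closed_eq R 0).
Qed.


Lemma cone_closed k (w : 'I_k -> 'rV[R]_n) : closed (cone w).
Proof.
elim: k w => [|k IH] w.
  apply: cone_indep_closed; rewrite /row_free.
  by have := rank_leq_row (wmx w); rewrite leqn0.
have [rf|nrf] := boolP (row_free (wmx w)); first exact: cone_indep_closed.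
have [al [[i0 ai0] aw]] : exists al : 'I_k.+1 -> R,
    (exists i, al i != 0) /\ \sum_i al i *: w i = 0.
  move: nrf; rewrite -kermx_eq0 => Kn0.
  have [i [j Kij]] : exists i j, kermx (wmx w) i j != 0.
    apply: contra_notP (negP Kn0) => H; apply/eqP/matrixP => i j;
    apply/eqP; rewrite [X in _ == X]mxE; apply: contra_notT H => Hij; by exists i, j.
  exists (fun l => kermx (wmx w) i l); split; first by exists j.
  rewrite sum_wmx.
  have -> : \row_l kermx (wmx w) i l = row i (kermx (wmx w)).
    by apply/rowP => l; rewrite !mxE.
  by rewrite -row_mul mulmx_ker; apply/rowP => l; rewrite !mxE.
wlog a0 : al i0 ai0 aw / 0 < al i0.
  move=> Hw; have [a0|a0] := ltP 0 (al i0); first exact: (Hw al i0).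
  apply: (Hw (fun i => - al i) i0).
  - by rewrite oppr_eq0.
  - under eq_bigr do rewrite scaleNr.
    by rewrite sumrN aw oppr0.
  - by rewrite oppr_gt0 lt_neqAle ai0 a0.
suff -> : cone w = \bigcup_(j in setT) cone (fun i => w (lift j i)).
  apply: closed_bigcup; first exact: finite_finset.
  by move=> j _; exact: IH.
apply/seteqP; split => x; last first.
  move=> [j _ [mu [mu0 ->]]].
  exists (fun i => if unlift j i is Some i' then mu i' else 0); split.
    by move=> i; case: unlift.
  rewrite (bigD1_ord j) //= unlift_none scale0r add0r.
  by apply: eq_bigr => i _; rewrite liftK.
move=> [mu [mu0 ->]].
have [j aj jmin] := @arg_minP _ _ _ i0 (fun i => 0 < al i) (fun i => mu i / al i) a0.
set s := mu j / al j.
have s0 : 0 <= s by rewrite /s divr_ge0 // ltW.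
pose mu' i := mu i - s * al i.
have mu'0 i : 0 <= mu' i.
  rewrite /mu'; have [ai|ai] := ltP 0 (al i).
    have := jmin i ai; rewrite -/s ler_pdivlMr // => H; lra.
  have := mu0 i; nra.
have mu'j : mu' j = 0 by rewrite /mu' /s divfK ?subrr // gt_eqF.
have E : \sum_i mu i *: w i = \sum_i mu' i *: w i.
  rewrite /mu'; under [RHS]eq_bigr do rewrite scalerBl.
  rewrite sumrB; under [X in _ - X]eq_bigr do rewrite -scalerA.
  by rewrite -scaler_sumr aw scaler0 subr0.
exists j => //; exists (fun i => mu' (lift j i)); split => //.
by rewrite E (bigD1_ord j) //= mu'j scale0r add0r.
Qed.

End Aux.

Theorem lemma5p1 (R : realType) (n : nat) (M : set 'rV[R]_n)
  (r : R) (gamma dg : R -> 'rV[R]_n) :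
  convex_polytope M ->
  M° !=set0 ->
  0 < r ->
  (forall t, 0 <= t < r -> M (gamma t)) ->
  C1_on_halfopen r gamma dg ->
  exists2 eps : R, 0 < eps &
    forall t, 0 <= t <= eps -> M (gamma 0 + t *: dg 0).
Proof.
move=> [k [v ->]] _ r0 gM [gc [gd [gdg dgc]]].
set p := gamma 0.
have [lam [lam0 [lam1 pE]]] : conv_hull_fin v p by apply: gM; rewrite lexx r0.
pose w i := v i - p.
have key : cone w (dg 0).
  apply: (@closed_cvg R _ (at_right (0:R)) _ (fun t => t^-1 *: (gamma t - p)) (cone w) (@cone_closed _ _ _ w) _ (dg 0)).
    near=> t.
    have t0 : 0 < t by near: t; exact: nbhs_right_gt.
    have tr : t < r by near: t; exact: nbhs_right_lt.
    have [l [l0 [l1 gE]]] : conv_hull_fin v (gamma t) by apply: gM; rewrite ltW.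
    exists (fun i => t^-1 * l i); split.
      by move=> i; rewrite mulr_ge0 // invr_ge0 ltW.
    rewrite gE /w; under [RHS]eq_bigr do rewrite -scalerA scalerBr.
    by rewrite -scaler_sumr sumrB -scaler_suml l1 scale1r.
  apply/cvgrPdist_lt => e e0.
  have dgc0 := (subspace_continuousP _ _).1 dgc 0.
  have /dgc0 : `[0, r[%classic (0:R) by rewrite /= in_itv /= lexx r0.
  move/cvgrPdist_lt => /(_ e e0); rewrite near_withinE => H.
  have [de /= de0 Hde] := H.
  near=> t.
  have t0 : 0 < t by near: t; exact: nbhs_right_gt.
  have tr : t < r by near: t; exact: nbhs_right_lt.
  have tde : t < de by near: t; exact: nbhs_right_lt.
  apply: mxnorm_lt => // i j; rewrite !mxE.
  have gc' : {within `[0, t], continuous gamma}.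
    apply: continuous_subspaceW gc => x /=; rewrite !in_itv /= => /andP[-> xt].
    exact: le_lt_trans xt tr.
  have Hd : forall x, x \in `]0, t[ -> is_derive x 1 (fun s => gamma s i j) (dg x i j).
    move=> x; rewrite in_itv /= => /andP[x0 xt].
    have xr : 0 < x < r by rewrite x0 (lt_trans xt tr).
    have dx := gd x xr.
    have dij : derivable (fun s => gamma s i j) x 1 := (derivable_mxP _ _ _).1 dx i j.
    have -> : dg x i j = 'D_1 (fun s => gamma s i j) x.
      by rewrite -gdg // derive1E derive_mx // mxE.
    exact: derivableP.
  have Hc : {within `[0, t], continuous (fun s => gamma s i j)}.
    move=> x; apply: (@continuous_comp (subspace `[0, t]) _ _ gamma (fun M : 'rV[R]_n => M i j)).
      exact: gc'.
    exact: coord_continuous.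
  have [c cI E] := @MVT R (fun s => gamma s i j) (fun s => dg s i j) 0 t t0 Hd Hc.
  rewrite /p E subr0 [_ * t]mulrC mulKf ?gt_eqF //.
  move: cI; rewrite in_itv /= => /andP[c0 ct].
  have := mxnorm_entry (dg 0 - dg c) i j; rewrite !mxE => HH.
  apply: le_lt_trans HH _.
  apply: Hde; last by rewrite /= in_itv /= (ltW c0) (lt_trans ct tr).
  by rewrite /ball /= sub0r normrN gtr0_norm // (lt_trans ct tde).
have [mu [mu0 dE]] := key.
set S := \sum_i mu i.
have S0 : 0 <= S by apply: sumr_ge0.
have S1 : 0 < S + 1 by lra.
exists (S + 1)^-1; first by rewrite invr_gt0.
move=> t /andP[t0 te].
have tS : t * (S + 1) <= 1 by rewrite -ler_pdivlMr // div1r.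
exists (fun i => (1 - t * S) * lam i + t * mu i); split.
  move=> i; apply: addr_ge0; apply: mulr_ge0 => //; nra.
split.
  by rewrite big_split /= -!mulr_sumr lam1 -/S; ring.
rewrite dE.
have -> : \sum_i mu i *: w i = \sum_i mu i *: v i - S *: p.
  by rewrite /w; under eq_bigr do rewrite scalerBr; rewrite sumrB scaler_suml.
under [RHS]eq_bigr do rewrite scalerDl -!scalerA.
rewrite big_split /= -!scaler_sumr -pE.
rewrite scalerBr scalerA scalerBl scale1r.
set X := \sum_i mu i *: v i.
by rewrite addrA addrAC.
Unshelve. all: by end_near.
Qed.
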